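(* Let $(b_n)_{n\ge1}$ be a sequence of nonnegative real numbers and $f:\mathbb Z_{>0}\to\mathbb R_{\ge0}$ an increasing function with $\sum_{\alpha\ge1} f(2^\alpha)/2^\alpha<+\infty$. Suppose there is an integer $n_0>0$ such that $b_{n+m}\le b_n+b_m+f(n)+f(m)$ for all integers $m,n\ge n_0$. Then $(b_n/n)_{n\ge1}$ converges to a limit in $\mathbb R_{\ge0}$. *)

(* Defs.v *)
From Stdlib Require Export Reals Lra Lia.
Open Scope R_scope.

(* Partial sums  sum_{alpha=1}^{N+1} f(2^alpha)/2^alpha  of the series in the hypothesis. *)
Definition dyadic_partial (f : nat -> R) (N : nat) : R :=
  sum_f_R0 (fun a => f (2 ^ S a)%nat / 2 ^ S a) N.

(* Main.v *)
Require Import Defs.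
From Stdlib Require Import Reals Lra Lia Classical ZArith.
Open Scope R_scope.

Definition Dd (f : nat -> R) (a : nat) : R := f (2 ^ a)%nat / 2 ^ a.
Fixpoint Hs (f : nat -> R) (c : nat) : R :=
  match c with 0 => 0 | S c' => Hs f c' + Dd f (S c') end.

Lemma pow2_ge1 : forall a, (1 <= 2 ^ a)%nat.
Proof. induction a; simpl; lia. Qed.

Lemma INR_pow2 : forall c, INR (2 ^ c)%nat = 2 ^ c.
Proof. intros c. rewrite pow_INR. replace (INR 2) with 2 by (simpl; lra). reflexivity. Qed.

Lemma nat_unbounded : forall A, exists n : nat, A < INR n.
Proof.
  intros A. destruct (archimed A) as [H1 H2].
  destruct (Z.le_gt_cases 0 (up A)) as [Hz|Hz].
  - exists (Z.to_nat (up A)). rewrite INR_IZR_INZ, Z2Nat.id; auto.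
  - exists 0%nat. apply IZR_lt in Hz. simpl. lra.
Qed.

Lemma bound_fin : forall (g : nat -> R) n, exists B, forall r, (r <= n)%nat -> g r <= B.
Proof.
  intros g n. induction n as [|n [B HB]].
  - exists (g 0%nat). intros r Hr. replace r with 0%nat by lia. lra.
  - exists (Rmax B (g (S n))). intros r Hr.
    destruct (Nat.eq_dec r (S n)) as [->|Hne].
    + apply Rmax_r.
    + eapply Rle_trans; [apply HB; lia | apply Rmax_l].
Qed.

Section Main.
Variables (b f : nat -> R) (n0 : nat) (l : R).
Hypothesis Hb : forall n, (1 <= n)%nat -> 0 <= b n.
Hypothesis Hf : forall n, (1 <= n)%nat -> 0 <= f n.
Hypothesis Hmono : forall n m, (1 <= n)%nat -> (n <= m)%nat -> f n <= f m.
Hypothesis Hl : Un_cv (dyadic_partial f) l.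
Hypothesis Hn0 : (0 < n0)%nat.
Hypothesis Hsub : forall n m, (n0 <= n)%nat -> (n0 <= m)%nat ->
     b (n + m)%nat <= b n + b m + f n + f m.

Lemma Dd_nonneg : forall a, 0 <= Dd f a.
Proof.
  intros a. unfold Dd. apply Rmult_le_pos.
  - apply Hf, pow2_ge1.
  - left. apply Rinv_0_lt_compat, pow_lt. lra.
Qed.

Lemma Hs_mono : forall c1 c2, (c1 <= c2)%nat -> Hs f c1 <= Hs f c2.
Proof.
  intros c1 c2 H. induction H; [lra|]. simpl. pose proof (Dd_nonneg (S m)). lra.
Qed.

Lemma H_dp : forall N, Hs f (S N) = dyadic_partial f N.
Proof.
  induction N.
  - unfold dyadic_partial, Dd. simpl sum_f_R0. simpl Hs. unfold Dd. simpl. ring.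
  - unfold dyadic_partial in *. rewrite tech5. rewrite <- IHN. reflexivity.
Qed.

Lemma Hs_le_l : forall c, Hs f c <= l.
Proof.
  intros c. apply Rle_trans with (Hs f (S c)).
  - apply Hs_mono; lia.
  - rewrite H_dp. apply (growing_ineq _ _); auto.
    intros n. rewrite <- !H_dp. apply Hs_mono; lia.
Qed.

Lemma T_small : forall eps, eps > 0 -> exists C, forall c, (C <= c)%nat -> l - Hs f c < eps.
Proof.
  intros eps Heps. destruct (Hl eps Heps) as [N HN].
  exists (S N). intros c Hc. destruct c as [|c]; [lia|].
  rewrite H_dp. specialize (HN c ltac:(lia)). unfold R_dist in HN.
  apply Rabs_def2 in HN. lra.
Qed.

Lemma fbound : forall m, (1 <= m)%nat -> f m <= 2 * INR m * (l - Hs f (Nat.log2 m)).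
Proof.
  intros m Hm. set (c := Nat.log2 m).
  destruct (Nat.log2_spec m ltac:(lia)) as [H1 H2]. fold c in H1, H2.
  assert (Hfm : f m <= f (2 ^ S c)%nat) by (apply Hmono; lia).
  assert (HD : Dd f (S c) <= l - Hs f c).
  { pose proof (Hs_le_l (S c)). simpl in H. lra. }
  assert (Heq : f (2 ^ S c)%nat = Dd f (S c) * 2 ^ S c).
  { unfold Dd. field. apply pow_nonzero. lra. }
  assert (Hp : 2 ^ S c <= 2 * INR m).
  { simpl. rewrite <- INR_pow2. apply le_INR in H1. lra. }
  pose proof (Dd_nonneg (S c)).
  assert (0 < 2 ^ S c) by (apply pow_lt; lra).
  nra.
Qed.

Lemma claimW : forall p, (n0 <= p)%nat -> forall k q, (1 <= q)%nat ->
   (q * p < 2 ^ (Nat.log2 p + k))%nat ->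
   b (q * p)%nat <= INR (q * p) * (b p / INR p + 8 * (Hs f (Nat.log2 p + k) - Hs f (Nat.log2 p))).
Proof.
  intros p Hp k. assert (Hp0 : (0 < p)%nat) by lia.
  assert (HpR : 0 < INR p) by (apply lt_0_INR; lia).
  assert (Hu : 0 <= b p / INR p).
  { unfold Rdiv. apply Rmult_le_pos; [apply Hb; lia | left; apply Rinv_0_lt_compat; auto]. }
  assert (Hbp : INR p * (b p / INR p) = b p) by (field; lra).
  induction k as [|k IH]; intros q Hq Hlt.
  - exfalso. rewrite Nat.add_0_r in Hlt.
    destruct (Nat.log2_spec p Hp0). nia.
  - rewrite Nat.add_succ_r in *. set (c := (Nat.log2 p + k)%nat) in *.
    assert (HG : 0 <= Hs f c - Hs f (Nat.log2 p)) by (pose proof (Hs_mono (Nat.log2 p) c ltac:(lia)); lra).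
    simpl Hs. pose proof (Dd_nonneg (S c)) as HDn.
    set (A := b p / INR p + 8 * (Hs f c - Hs f (Nat.log2 p))) in *.
    assert (HA : b p / INR p <= A) by (unfold A; lra).
    replace (b p / INR p + 8 * (Hs f c + Dd f (S c) - Hs f (Nat.log2 p)))
      with (A + 8 * Dd f (S c)) by (unfold A; ring).
    assert (HqpR : 0 <= INR (q * p)) by apply pos_INR.
    destruct (Nat.lt_ge_cases (q * p) (2 ^ c)) as [Hs1|Hs1].
    + specialize (IH q Hq Hs1). fold A in IH. nra.
    + destruct (Nat.eq_dec q 1) as [->|Hq1].
      * rewrite Nat.mul_1_l in *. nra.
      * set (F := f (2 ^ S c)%nat).
        assert (HDF : F = Dd f (S c) * (2 * 2 ^ c)).
        { unfold F, Dd. simpl pow. field. apply pow_nonzero. lra. }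
        assert (Hc2 : 2 ^ c <= INR (q * p)).
        { rewrite <- INR_pow2. apply le_INR. auto. }
        assert (Hpow : (2 ^ S c = 2 * 2 ^ c)%nat) by (simpl; lia).
        assert (HF4 : 4 * F <= INR (q * p) * (8 * Dd f (S c))) by nra.
        destruct (Nat.Even_or_Odd q) as [[q0 ->]|[q0 ->]].
        -- assert (Hq0 : (1 <= q0)%nat) by lia.
           assert (Hlt0 : (q0 * p < 2 ^ c)%nat) by nia.
           specialize (IH q0 Hq0 Hlt0). fold A in IH.
           assert (Hx : (2 * q0 * p = q0 * p + q0 * p)%nat) by lia.
           rewrite Hx in *. rewrite plus_INR in *.
           assert (Hn : (n0 <= q0 * p)%nat) by nia.
           pose proof (Hsub _ _ Hn Hn).
           assert (f (q0 * p)%nat <= F) by (apply Hmono; nia).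
           nra.
        -- assert (Hq0 : (1 <= q0)%nat) by lia.
           assert (Hlt0 : (q0 * p < 2 ^ c)%nat) by nia.
           specialize (IH q0 Hq0 Hlt0). fold A in IH.
           assert (Hx : ((2 * q0 + 1) * p = q0 * p + q0 * p + p)%nat) by lia.
           rewrite Hx in *. rewrite !plus_INR in *.
           assert (Hn : (n0 <= q0 * p)%nat) by nia.
           pose proof (Hsub _ _ Hn Hn).
           assert (Hn2 : (n0 <= q0 * p + q0 * p)%nat) by nia.
           pose proof (Hsub _ _ Hn2 Hp).
           assert (f (q0 * p)%nat <= F) by (apply Hmono; nia).
           assert (f (q0 * p + q0 * p)%nat <= F) by (apply Hmono; nia).
           assert (f p <= F) by (apply Hmono; nia).
           assert (INR p * (b p / INR p) <= INR p * A) by nra.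
           nra.
Qed.

Lemma boundK : forall p, (n0 <= p)%nat -> exists B, 0 <= B /\ forall m, (2 * p <= m)%nat ->
  b m <= INR m * (b p / INR p + 8 * (l - Hs f (Nat.log2 p))) + B
         + 4 * INR m * (l - Hs f (Nat.log2 m)).
Proof.
  intros p Hp.
  destruct (bound_fin (fun r => b (p + r)%nat) p) as [B HB].
  exists B. split.
  { eapply Rle_trans; [apply Hb | apply (HB 0%nat)]; lia. }
  intros m Hm.
  assert (Hp0 : p <> 0%nat) by lia.
  pose proof (Nat.div_mod_eq m p) as Hdm.
  pose proof (Nat.mod_upper_bound m p Hp0) as Hr.
  set (q := (m / p)%nat) in *. set (r := (m mod p)%nat) in *.
  assert (Hq : (2 <= q)%nat) by nia.
  set (q1 := (q - 1)%nat).
  assert (Hme : m = (q1 * p + (p + r))%nat) by (unfold q1; nia).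
  assert (Hn1 : (n0 <= q1 * p)%nat) by (unfold q1; nia).
  assert (Hn2 : (n0 <= p + r)%nat) by lia.
  pose proof (Hsub _ _ Hn1 Hn2) as HS. rewrite <- Hme in HS.
  assert (HBr : b (p + r)%nat <= B) by (apply HB; lia).
  assert (Hlt : (q1 * p < 2 ^ (Nat.log2 p + m))%nat).
  { pose proof (Nat.pow_gt_lin_r 2 m ltac:(lia)).
    pose proof (Nat.pow_le_mono_r 2 m (Nat.log2 p + m) ltac:(lia) ltac:(lia)). lia. }
  pose proof (claimW p Hp m q1 ltac:(unfold q1; lia) Hlt) as HW.
  pose proof (Hs_le_l (Nat.log2 p + m)).
  assert (HpR : 0 < INR p) by (apply lt_0_INR; lia).
  assert (Hu : 0 <= b p / INR p).
  { unfold Rdiv. apply Rmult_le_pos; [apply Hb; lia | left; apply Rinv_0_lt_compat; auto]. }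
  pose proof (Hs_le_l (Nat.log2 p)).
  assert (Hqm : INR (q1 * p) <= INR m) by (apply le_INR; lia).
  pose proof (pos_INR (q1 * p)).
  assert (f (q1 * p)%nat <= f m) by (apply Hmono; lia).
  assert (f (p + r)%nat <= f m) by (apply Hmono; lia).
  pose proof (fbound m ltac:(lia)).
  set (u := b p / INR p) in *.
  assert (b (q1 * p)%nat <= INR (q1 * p) * (u + 8 * (l - Hs f (Nat.log2 p)))) by nra.
  assert (INR (q1 * p) * (u + 8 * (l - Hs f (Nat.log2 p))) <=
          INR m * (u + 8 * (l - Hs f (Nat.log2 p)))) by nra.
  lra.
Qed.

End Main.

Theorem propositionA (b f : nat -> R) (n0 : nat) :
  (forall n, (1 <= n)%nat -> 0 <= b n) ->
  (forall n, (1 <= n)%nat -> 0 <= f n) ->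
  (forall n m, (1 <= n)%nat -> (n <= m)%nat -> f n <= f m) ->
  (exists l, Un_cv (dyadic_partial f) l) ->
  (0 < n0)%nat ->
  (forall n m, (n0 <= n)%nat -> (n0 <= m)%nat ->
     b (n + m)%nat <= b n + b m + f n + f m) ->
  exists L, 0 <= L /\ Un_cv (fun n => b (S n) / INR (S n)) L.
Proof.
  intros Hb Hf Hmono [l Hl] Hn0 Hsub.
  assert (HHl : forall c, Hs f c <= l) by (intro; eapply Hs_le_l; eauto).
  assert (Hu : forall p, (1 <= p)%nat -> 0 <= b p / INR p).
  { intros p Hp. unfold Rdiv. apply Rmult_le_pos; [apply Hb; lia|].
    left; apply Rinv_0_lt_compat, lt_0_INR; lia. }
  set (Lset := fun x => forall p, (n0 <= p)%nat ->
                 x <= b p / INR p + 8 * (l - Hs f (Nat.log2 p))).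
  destruct (completeness Lset) as [L [HL1 HL2]].
  { exists (b n0 / INR n0 + 8 * (l - Hs f (Nat.log2 n0))). intros x Hx. apply Hx. lia. }
  { exists 0. intros p Hp. pose proof (Hu p ltac:(lia)). pose proof (HHl (Nat.log2 p)). lra. }
  assert (HLlow : forall p, (n0 <= p)%nat -> L <= b p / INR p + 8 * (l - Hs f (Nat.log2 p))).
  { intros p Hp. apply HL2. intros x Hx. apply Hx. auto. }
  exists L. split.
  { apply HL1. intros p Hp. pose proof (Hu p ltac:(lia)). pose proof (HHl (Nat.log2 p)). lra. }
  intros eps Heps.
  assert (Hex : exists p, (n0 <= p)%nat /\
            b p / INR p + 8 * (l - Hs f (Nat.log2 p)) < L + eps / 2).
  { destruct (classic (exists p, (n0 <= p)%nat /\
            b p / INR p + 8 * (l - Hs f (Nat.log2 p)) < L + eps / 2)) as [H|H]; auto.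
    exfalso. assert (Lset (L + eps / 2)).
    { intros p Hp. apply Rnot_lt_le. intro Hc. apply H. exists p. split; auto. }
    specialize (HL1 _ H0). lra. }
  destruct Hex as [p [Hp HpL]].
  destruct (boundK b f n0 l Hb Hf Hmono Hl Hn0 Hsub p Hp) as [B [HB0 HB]].
  assert (HT : exists C, forall c, (C <= c)%nat -> l - Hs f c < eps / 16) by (eapply T_small; eauto; lra).
  destruct HT as [C HC].
  destruct (nat_unbounded (4 * B / eps)) as [M3 HM3].
  exists (2 * p + 2 ^ C + M3 + n0)%nat. intros n Hn.
  set (m := S n).
  assert (Hlm : (C <= Nat.log2 m)%nat).
  { rewrite <- (Nat.log2_pow2 C) by lia. apply Nat.log2_le_mono. unfold m; lia. }
  specialize (HC _ Hlm).
  assert (HmR : 0 < INR m) by (apply lt_0_INR; unfold m; lia).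
  assert (HM3m : INR M3 <= INR m) by (apply le_INR; unfold m; lia).
  assert (H4B : 4 * B < eps * INR m).
  { assert (4 * B / eps * eps = 4 * B) by (field; lra). nra. }
  specialize (HB m ltac:(unfold m; lia)).
  specialize (HLlow m ltac:(unfold m; lia)).
  set (y := b m / INR m) in *.
  assert (Hy : b m = y * INR m) by (unfold y; field; lra).
  rewrite Hy in HB.
  pose proof (HHl (Nat.log2 m)).
  unfold R_dist. change (b (S n) / INR (S n)) with y.
  apply Rabs_def1.
  - nra.
  - lra.
Qed.
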